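(* Assume $X$ is a semimartingale. Define the predictable set $$\Gamma_0:=\{(\omega,t,x): X_{t-}(\omega)<b(t),\ x=b(t)-X_{t-}(\omega)\}.$$ If $\mathbf 1_{\Gamma_0}*\nu^X\equiv 0$, then $\mathbb P(J_0)=0$. In particular this holds whenever $\nu^X$ admits a predictable disintegration $\nu^X(\omega,dt,dx)=K(\omega,t,dx)\,dA_t(\omega)$, with $A$ a predictable increasing process and $K(\omega,t,\cdot)$ a diffuse (atomless) measure for $\mathbb P\otimes dA$-almost every $(\omega,t)$.
   Context: Let $(\Omega,\mathcal F,\mathbb F=(\mathcal F_t)_{t\ge0},\mathbb P)$ be a filtered probability space satisfying the usual conditions. Let $X$ be a real-valued $\mathbb F$-semimartingale (càdlàg) and $b:[0,\infty)\to\mathbb R$ a continuous deterministic function, with $X_0<b(0)$ identically. $X_{t-}$ denotes the left limit. Let $\mu^X(dt,dx):=\sum_{s>0:\Delta X_s\ne0}\delta_{(s,\Delta X_s)}(dt,dx)$ be the jump measure of $X$ and $\nu^X$ its predictable compensator. For a function $W\ge0$ on $\Omega\times[0,\infty)\times\mathbb R$, $(W*\mu)_t:=\int_0^t\int_{\mathbb R}W(s,x)\,\mu(ds,dx)$; ''$\equiv0$'' means identically zero up to evanescence. Set $Y_t:=X_t-b(t)$, $\tau:=\inf\{t\ge0:Y_t\ge0\}$ ($\inf\emptyset=\infty$), and $J_0:=\{\tau<\infty,\,Y_{\tau-}<0,\,Y_\tau=0\}$. *)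

(* Defs.v *)
From HB Require Import structures.
From mathcomp Require Import all_boot all_order all_algebra.
From mathcomp Require Import all_classical all_reals all_analysis.
From mathcomp Require Import measurable_realfun.
Set Implicit Arguments. Unset Strict Implicit. Unset Printing Implicit Defensive.
Import Order.TTheory GRing.Theory Num.Theory.
Import numFieldNormedType.Exports.
Local Open Scope classical_set_scope.
Local Open Scope ring_scope.

(* Time is indexed by R, only t >= 0 matters.  Processes are X : R -> T -> R
   (X t w = X_t(w)).  Sigma-algebras of the filtration are F t : set (set T). *)
Section Stoch.
Context {R : realType} {d : measure_display} {T : measurableType d}.

Definition filtration (F : R -> set (set T)) :=
  (forall t, 0 <= t -> sigma_algebra setT (F t) /\ F t `<=` measurable) /\
  (forall s t, 0 <= s -> s <= t -> F s `<=` F t).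

Definition usual_conditions (P : probability T R) (F : R -> set (set T)) :=
  filtration F /\
  (forall t, 0 <= t -> F t = \bigcap_(u in [set u | t < u]) F u) /\
  (forall N, P.-negligible N -> F 0 N).

Definition cadlag (X : R -> T -> R) := forall w (t : R), 0 <= t ->
  ((fun s => X s w) @ t^'+ --> X t w) /\
  (0 < t -> exists l : R, (fun s => X s w) @ t^'- --> l).

Definition leftlim (X : R -> T -> R) (t : R) (w : T) : R :=
  lim ((fun s => X s w) @ t^'-).
Definition jump (X : R -> T -> R) (t : R) (w : T) : R := X t w - leftlim X t w.

Definition adapted (F : R -> set (set T)) (X : R -> T -> R) :=
  forall t, 0 <= t -> forall B : set R, measurable B -> F t (X t @^-1` B).

Definition stopping_time (F : R -> set (set T)) (tau : T -> \bar R) :=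
  (forall w, (0 <= tau w)%E) /\
  (forall t, 0 <= t -> F t [set w | (tau w <= t%:E)%E]).

Definition stopped (X : R -> T -> R) (tau : T -> \bar R) (t : R) (w : T) : R :=
  if (tau w < t%:E)%E then X (fine (tau w)) w else X t w.

Definition martingale (P : probability T R) (F : R -> set (set T))
    (M : R -> T -> R) :=
  cadlag M /\ adapted F M /\
  (forall t, 0 <= t -> P.-integrable setT (EFin \o M t)) /\
  (forall s t, 0 <= s -> s <= t -> forall A, F s A ->
     (\int[P]_(w in A) (M t w)%:E = \int[P]_(w in A) (M s w)%:E)%E).

Definition local_martingale (P : probability T R) (F : R -> set (set T))
    (M : R -> T -> R) :=
  cadlag M /\ adapted F M /\
  exists tau : nat -> T -> \bar R,
    (forall n, stopping_time F (tau n)) /\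
    (forall n w, (tau n w <= tau n.+1 w)%E) /\
    {ae P, forall w, (fun n => tau n w) @ \oo --> +oo%E} /\
    (forall n, martingale P F (stopped M (tau n))).

Definition finite_variation (F : R -> set (set T)) (A : R -> T -> R) :=
  cadlag A /\ adapted F A /\ (forall w, A 0 w = 0) /\
  (forall w t, 0 <= t -> bounded_variation 0 t (fun s => A s w)).

Definition semimartingale (P : probability T R) (F : R -> set (set T))
    (X : R -> T -> R) :=
  cadlag X /\ adapted F X /\
  exists M A, local_martingale P F M /\ (forall w, M 0 w = 0) /\
    finite_variation F A /\
    (forall t w, 0 <= t -> X t w = X 0 w + M t w + A t w).

Definition pred_rects (F : R -> set (set T)) : set (set (T * R)) :=
  [set C | (exists A, F 0 A /\ C = A `*` [set 0]) \/
           (exists s t A, [/\ 0 <= s, s < t, F s A &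
                              C = A `*` [set u | s < u <= t]])].

Definition predictable_set (F : R -> set (set T)) := <<s pred_rects F >>.

Definition predictable_fun (F : R -> set (set T)) (H : T -> R -> \bar R) :=
  forall B : set (\bar R), measurable B ->
    predictable_set F [set p | B (H p.1 p.2)].

Definition ptilde_rects (F : R -> set (set T)) : set (set (T * (R * R))) :=
  [set C | exists A B, [/\ predictable_set F A, measurable B &
             C = [set p | A (p.1, p.2.1) /\ B p.2.2]]].

Definition ptilde_fun (F : R -> set (set T)) (W : T -> R * R -> \bar R) :=
  forall B : set (\bar R), measurable B ->
    <<s ptilde_rects F >> [set p | B (W p.1 p.2)].

(** (W * mu^X)_oo (w) = sum over jump times s > 0 of W(w, s, Delta X_s). *)
Definition mu_int_oo (X : R -> T -> R) (W : T -> R * R -> \bar R) (w : T) :=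
  \esum_(s in [set s : R | 0 < s /\ jump X s w != 0]) W w (s, jump X s w).

Definition nu_int (nu : T -> {measure set (R * R) -> \bar R})
    (W : T -> R * R -> \bar R) (w : T) (t : R) :=
  (\int[nu w]_(z in [set z : R * R | (0 < z.1 <= t)%R]) W w z)%E.
Definition nu_int_oo (nu : T -> {measure set (R * R) -> \bar R})
    (W : T -> R * R -> \bar R) (w : T) :=
  (\int[nu w]_(z in [set z : R * R | (0 < z.1)%R]) W w z)%E.

Definition jump_compensator (P : probability T R) (F : R -> set (set T))
    (X : R -> T -> R) (nu : T -> {measure set (R * R) -> \bar R}) :=
  forall W : T -> R * R -> \bar R, ptilde_fun F W ->
    (forall w z, (0 <= W w z)%E) ->
    predictable_fun F (nu_int nu W) /\
    (\int[P]_w mu_int_oo X W w = \int[P]_w nu_int_oo nu W w)%E.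

Definition Yproc (X : R -> T -> R) (b : R -> R) : R -> T -> R :=
  fun t w => X t w - b t.

Definition hit_time (X : R -> T -> R) (b : R -> R) (w : T) : \bar R :=
  ereal_inf [set t%:E | t in [set t | 0 <= t /\ 0 <= Yproc X b t w]].

Definition J0 (X : R -> T -> R) (b : R -> R) : set T :=
  [set w | exists r : R, [/\ hit_time X b w = r%:E,
                             leftlim (Yproc X b) r w < 0 &
                             Yproc X b r w = 0]].

Definition Gamma0 (X : R -> T -> R) (b : R -> R) (w : T) : set (R * R) :=
  [set z | leftlim X z.1 w < b z.1 /\ z.2 = b z.1 - leftlim X z.1 w].

End Stoch.

(* Main.v *)
Require Import Defs.
From HB Require Import structures.
From mathcomp Require Import all_boot all_order all_algebra.
From mathcomp Require Import all_classical all_reals all_analysis.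
From mathcomp Require Import measurable_realfun.
From mathcomp Require Import lra ring.
Import Order.TTheory GRing.Theory Num.Theory.
Import numFieldNormedType.Exports.
Local Open Scope classical_set_scope.
Local Open Scope ring_scope.
Module Inner.
Set Implicit Arguments. Unset Strict Implicit. Unset Printing Implicit Defensive.
Import HBNNSimple.

Section inner.
Local Open Scope ereal_scope.
Context d (T : measurableType d) (R : realType) (mu : {measure set T -> \bar R}).

Lemma inner_ge (D S : set T) (f : T -> \bar R) : measurable S -> S `<=` D ->
  (forall x, D x -> 0 <= f x) -> (forall x, S x -> 1 <= f x) ->
  mu S <= \int[mu]_(x in D) f x.
Proof.
move=> mS SD f0 f1; rewrite ge0_integralE//.
apply: ereal_sup_ubound => /=; exists (indic_nnsfun R mS); last first.
  by rewrite sintegral_indic.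
move=> x /=; rewrite /patch; case: ifPn => [/[!inE] Dx|].
  rewrite mindicE /=.
  by have [Sx|nSx] := pselect (S x); [rewrite mem_set// f1|rewrite memNset// f0].
rewrite /= notin_setE => nDx; rewrite mindicE memNset//.
by apply: contra_not nDx; exact: SD.
Qed.

Lemma inner0 (D : set T) (f : T -> \bar R) : (forall x, D x -> 0 <= f x) ->
  (forall S, measurable S -> S `<=` D `&` [set x | 0 < f x] -> mu S = 0) ->
  \int[mu]_(x in D) f x = 0.
Proof.
move=> f0 H; apply/eqP; rewrite eq_le integral_ge0// andbT ge0_integralE//.
apply: ge_ereal_sup => _ /= [h hf <-].
pose S := h @^-1` `]0%R, +oo[%classic.
have mS : measurable S.
  rewrite -[S]setTI; apply: (measurable_funP h) => //.
have muS : mu S = 0.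
  apply: H => // x; rewrite /S /= in_itv/= andbT => hx; have := hf x; rewrite /patch.
  case: ifPn => [/[!inE] Dx|]; last by rewrite lee_fin leNgt hx.
  by move=> le; split => //; rewrite (lt_le_trans _ le)// lte_fin.
have -> : sintegral mu h = sintegral mu (h \_ setT) by rewrite patch_setT.
rewrite -integral_nnsfun//.
rewrite (ge0_negligible_integral _ _ _ _ muS)//; last 2 first.
- by apply/measurable_EFinP; exact: measurable_funP.
- by move=> x _; rewrite lee_fin.
rewrite integral0_eq// => x [_ nSx]; apply/eqP; rewrite eqe eq_le fun_ge0 andbT.
by rewrite leNgt; apply/negP => hx; apply: nSx; rewrite /S /= in_itv/= andbT.
Qed.
End inner.

Lemma inner_le d (T : measurableType d) (R : realType) (mu : {measure set T -> \bar R})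
  (D : set T) (f g : T -> \bar R) : (forall x, D x -> (0 <= f x)%E) ->
  (forall x, D x -> (f x <= g x)%E) ->
  (\int[mu]_(x in D) f x <= \int[mu]_(x in D) g x)%E.
Proof.
move=> f0 fg; have g0 x : D x -> (0 <= g x)%E by move=> Dx; exact: le_trans (f0 _ Dx) (fg _ Dx).
rewrite !ge0_integralE//; apply: ereal_sup_le => _ [h hf <-]; exists h => // x.
apply: le_trans (hf x) _; rewrite /patch; case: ifPn => // /[!inE] Dx; exact: fg.
Qed.
End Inner.
Import Inner.
Set Implicit Arguments. Unset Strict Implicit. Unset Printing Implicit Defensive.

Section lim.
Context {R : realType}.

Lemma within_delta (A : set R) (t l : R) (f : R -> R) :
  f @ within A (nbhs t) --> l -> forall e, 0 < e ->
  exists2 δ, 0 < δ & forall u, `|t - u| < δ -> A u -> `|l - f u| < e.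
Proof.
move=> /cvgrPdist_lt H e e0; have := H e e0.
rewrite /prop_near1 /within /= => /nbhs_ballP[δ /= δ0 Hd].
by exists δ => // u tu Au; apply: Hd => //; rewrite /ball /= .
Qed.

Lemma delta_within (A : set R) (t l : R) (f : R -> R) :
  (forall e, 0 < e ->
  exists2 δ, 0 < δ & forall u, `|t - u| < δ -> A u -> `|l - f u| < e) ->
  f @ within A (nbhs t) --> l.
Proof.
move=> H; apply/cvgrPdist_lt => e e0; have [δ δ0 Hd] := H e e0.
rewrite /prop_near1 /within /=; apply/nbhs_ballP; exists δ => //= u tu Au; exact: Hd.

Qed.
End lim.

Section proc.
Context {R : realType} {d : measure_display} {T : measurableType d}.
Variables (X : R -> T -> R) (b : R -> R).
Hypothesis HX : cadlag X.
Hypothesis Hb : {within [set t : R | 0 <= t], continuous b}.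

Let Y := Yproc X b.

Lemma b_cont : {in `]0, +oo[, continuous b} /\ b x @[x --> 0^'+] --> b 0.
Proof.
apply/continuous_within_itvcyP.
by rewrite (_ : `[0, +oo[%classic = [set t : R | 0 <= t])// set_itvcy.
Qed.

Lemma b_right t : 0 <= t -> b x @[x --> t^'+] --> b t.
Proof.
rewrite le_eqVlt => /orP[/eqP<-|t0]; first exact: b_cont.2.
apply: cvg_at_right_filter; apply: b_cont.1; by rewrite in_itv /= t0.
Qed.

Lemma b_left t : 0 < t -> b x @[x --> t^'-] --> b t.
Proof.
move=> t0; apply: cvg_at_left_filter; apply: b_cont.1; by rewrite in_itv /= t0.
Qed.

Lemma Yright t w : 0 <= t -> forall e, 0 < e ->
  exists2 δ, 0 < δ & forall u, t <= u < t + δ -> `|Y t w - Y u w| < e.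
Proof.
move=> t0 e e0; have [HR _] := HX w t0.
have e2 : 0 < e / 2 by rewrite divr_gt0.
have [δ1 δ10 H1] := within_delta HR e2.
have [δ2 δ20 H2] := within_delta (b_right t0) e2.
exists (Num.min δ1 δ2); first by rewrite lt_min δ10.
move=> u /andP[tu ut]; have [->|tu'] := eqVneq t u; first by rewrite subrr normr0.
have tlu : t < u by rewrite lt_neqAle tu' tu.
have dtu : `|t - u| < Num.min δ1 δ2 by rewrite distrC ger0_norm ?subr_ge0 // ltrBlDl.
rewrite lt_min in dtu; case/andP: dtu => d1 d2.
have := H1 u d1 tlu; have := H2 u d2 tlu.
rewrite /Y /Yproc => hb hx.
rewrite (_ : _ - _ = (X t w - X u w) - (b t - b u)); last by lra.
rewrite (le_lt_trans (ler_normB _ _))// [e]splitr ltrD//.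
Qed.

Definition Zl t w := leftlim Y t w.

Lemma Yleft t w : 0 < t ->
  (fun s => Y s w) @ t^'- --> Zl t w /\ leftlim X t w = Zl t w + b t.
Proof.
move=> t0; have [_ /(_ t0) [lX HlX]] := HX w (ltW t0).
have HY : (fun s => Y s w) @ t^'- --> lX - b t.
  exact: (cvgB HlX (b_left t0)).
have eY : Zl t w = lX - b t by apply: cvg_lim.
have eX : leftlim X t w = lX by apply: cvg_lim.
by rewrite eY; split => //; rewrite eX subrK.
Qed.

Lemma Yleft_delta t w : 0 < t -> forall e, 0 < e ->
  exists2 δ, 0 < δ & forall u, t - δ < u < t -> `|Zl t w - Y u w| < e.
Proof.
move=> t0 e e0; have [δ δ0 H] := within_delta (Yleft w t0).1 e0.
exists δ => // u /andP[tu ut]; apply: H => //.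
by rewrite ger0_norm ?subr_ge0 ?ltW// ltrBlDr -ltrBlDl.
Qed.
End proc.


Lemma ratP {R : realType} (x y : R) : x < y -> exists q : rat, x < ratr q /\ ratr q < y.
Proof. by move=> /rat_in_itvoo[q]; rewrite in_itv /= => /andP[]; exists q. Qed.

Lemma eps_gt0 {R : realType} (k : nat) : 0 < (k.+1%:R^-1 : R).
Proof. by rewrite invr_gt0 ltr0n. Qed.

Section Mset.
Context {R : realType} {d : measure_display} {T : measurableType d}.
Variables (X : R -> T -> R) (b : R -> R).

Definition Sg (k : nat) (u : rat) (w : T) := - k.+1%:R^-1 < Yproc X b (ratr u) w.

Definition Mset (p : rat) (k : nat) : set T := [set w | 0 <= (ratr p : R) /\
  (exists a : rat, (ratr p : R) < ratr a /\
     forall u : rat, (ratr p : R) < ratr u -> (ratr u : R) < ratr a -> ~ Sg k u w) /\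
  forall j : nat, exists v : rat,
    (exists u : rat, (ratr p : R) < ratr u /\ (ratr u : R) < ratr v /\ Sg k u w) /\
    forall u : rat, (ratr p : R) < ratr u ->
      (exists u' : rat, (ratr p : R) < ratr u' /\ (ratr u' : R) < ratr u /\ Sg k u' w) ->
      (ratr u : R) < ratr v -> `|Yproc X b (ratr u) w| < j.+1%:R^-1].

Hypothesis HX : cadlag X.
Hypothesis Hb : {within [set t : R | 0 <= t], continuous b}.
Local Notation Y := (Yproc X b).

Lemma M_sub_E p k w : Mset p k w ->
  exists s, [/\ 0 < s, Y s w = 0 & Zl X b s w < 0].
Proof.
move=> [p0 [[a [pa Ha]] HB]].
pose S := [set x : R | exists2 u : rat, ((ratr p : R) < ratr u /\ Sg k u w) & x = ratr u].
have [v0 [[u0 [pu0 [u0v0 Su0]]] _]] := HB 0%N.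
have S0 : S (ratr u0) by exists u0.
have lbS : lbound S (ratr a).
  move=> x [u [pu Su] ->]; rewrite leNgt; apply/negP => ua; exact: Ha u pu ua Su.
pose s := inf S.
have as_ : ratr a <= s by apply: lb_le_inf => //; exists (ratr u0).
have sS x : S x -> s <= x by move=> Sx; apply: ge_inf => //; exists (ratr a).
have ps : ratr p < s by exact: lt_le_trans as_.
have s0 : 0 < s by exact: le_lt_trans ps.
have Hbelow u : ratr p < u -> u < s -> Y u w <= - k.+1%:R^-1.
  move=> pu us; rewrite leNgt; apply/negP => Hu.
  have u0' : 0 <= u by exact: le_trans (ltW pu).
  have e0 : 0 < Y u w + k.+1%:R^-1 by rewrite -ltrBlDr sub0r.
  have [δ δ0 Hδ] := Yright HX Hb w u0' e0.
  have [q [uq qm]] : exists q : rat, u < ratr q /\ ratr q < Num.min (u + δ) s.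
    by apply: ratP; rewrite lt_min ltrDl δ0 us.
  rewrite lt_min in qm; case/andP: qm => qδ qs.
  have : S (ratr q).
    exists q => //; split; first exact: lt_trans uq.
    have := Hδ (ratr q); rewrite (ltW uq) qδ => /(_ isT); rewrite ltr_norml => /andP[h1 h2].
    by move: h2; rewrite /Sg ltrD2l ltrNl.
  by move=> /sS; rewrite leNgt qs.
have Zs : Zl X b s w <= - k.+1%:R^-1.
  apply/ler_addgt0Pr => e e0.
  have [δ δ0 Hδ] := Yleft_delta HX Hb w s0 e0.
  pose u := (Num.max (s - δ) (ratr p) + s) / 2.
  have hm : Num.max (s - δ) (ratr p) < s by rewrite gt_max ps gtrBl δ0.
  have hu1 : Num.max (s - δ) (ratr p) < u by rewrite /u; lra.
  have hu2 : u < s by rewrite /u; lra.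
  rewrite gt_max in hu1; case/andP: hu1 => hu1 hu1'.
  have := Hδ u; rewrite hu1 hu2 => /(_ isT); rewrite ltr_norml => /andP[h1 h2].
  have := Hbelow u hu1' hu2; set ε := (k.+1%:R^-1 : R); lra.
have Ys : Y s w = 0.
  apply/eqP; rewrite -normr_eq0 eq_le normr_ge0 andbT.
  apply/ler_addgt0Pr => e e0.
  have [j Hj] := ltr_add_invr (divr_gt0 e0 (ltr0n _ 2) : 0 < e / 2).
  rewrite add0r in Hj.
  have [v [[u1 [pu1 [u1v Su1]]] Hv]] := HB j.
  have sv : s < ratr v by apply: le_lt_trans u1v; apply: sS; exists u1.
  have [δ δ0 Hδ] := Yright HX Hb w (ltW s0) (eps_gt0 j).
  have [q [sq qm]] : exists q : rat, s < ratr q /\ ratr q < Num.min (s + δ) (ratr v).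
    by apply: ratP; rewrite lt_min ltrDl δ0 sv.
  rewrite lt_min in qm; case/andP: qm => qδ qv.
  have [y [u' [pu' Su'] ->] yq] := inf_lt (ex_intro _ _ S0) sq.
  have Hq := Hv q (lt_trans ps sq) (ex_intro _ u' (conj pu' (conj yq Su'))) qv.
  have := Hδ (ratr q); rewrite (ltW sq) qδ => /(_ isT) Hd.
  rewrite add0r; apply: ltW.
  rewrite (_ : Y s w = (Y s w - Y (ratr q) w) + Y (ratr q) w); last by rewrite subrK.
  rewrite (le_lt_trans (ler_normD _ _))//.
  set ε := (j.+1%:R^-1 : R) in Hj Hq Hd *; lra.
exists s; split => //; rewrite (le_lt_trans Zs)// oppr_lt0 eps_gt0.
Qed.

Lemma E_sub_M r0 w : 0 < r0 -> Y r0 w = 0 -> Zl X b r0 w < 0 ->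
  exists p k, Mset p k w.
Proof.
move=> r00 Yr0 Zr0.
have Z2 : 0 < - Zl X b r0 w / 2 by rewrite divr_gt0// oppr_gt0.
have [k Hk] := ltr_add_invr Z2.
rewrite add0r in Hk.
have [δ δ0 Hδ] := Yleft_delta HX Hb w r00 (eps_gt0 k).
have Hbelow u : r0 - δ < u -> u < r0 -> Y u w < - k.+1%:R^-1.
  move=> h1 h2; have := Hδ u; rewrite h1 h2 => /(_ isT); rewrite ltr_norml => /andP[g1 g2].
  set ε := (k.+1%:R^-1 : R) in Hk g1 g2 *; lra.
have [p [pm pr]] : exists p : rat, Num.max (r0 - δ) 0 < (ratr p : R) /\ (ratr p : R) < r0.
  by apply: ratP; rewrite gt_max r00 gtrBl δ0.
rewrite gt_max in pm; case/andP: pm => pm1 pm2.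
have [a [pa ar]] : exists a : rat, (ratr p : R) < ratr a /\ (ratr a : R) < r0 by apply: ratP.
exists p, k; split; first exact: ltW.
split.
  exists a; split => // u pu ua; rewrite /Sg => Su.
  have := Hbelow (ratr u) (lt_trans pm1 pu) (lt_trans ua ar).
  by rewrite ltNge (ltW Su).
move=> j.
have e0 : 0 < Num.min (k.+1%:R^-1) (j.+1%:R^-1 : R) by rewrite lt_min !eps_gt0.
have [δ' δ'0 Hδ'] := Yright HX Hb w (ltW r00) e0.
have [v [r0v vd]] : exists v : rat, r0 < ratr v /\ (ratr v : R) < r0 + δ'.
  by apply: ratP; rewrite ltrDl.
have Hnear u : r0 < u -> u < ratr v -> `|Y u w| < Num.min (k.+1%:R^-1) (j.+1%:R^-1 : R).
  move=> h1 h2; have := Hδ' u; rewrite (ltW h1) (lt_trans h2 vd) => /(_ isT).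
  by rewrite Yr0 sub0r normrN.
exists v; split.
  have [u [r0u uv]] : exists u : rat, r0 < ratr u /\ (ratr u : R) < ratr v by apply: ratP.
  exists u; split; first exact: lt_trans pr r0u.
  split => //; have := Hnear _ r0u uv; rewrite lt_min ltr_norml => /andP[/andP[]].
  by [].
move=> u pu [u' [pu' [u'u Su']]] uv.
have r0u' : r0 <= ratr u'.
  rewrite leNgt; apply/negP => u'r0.
  have := Hbelow (ratr u') (lt_trans pm1 pu') u'r0.
  by rewrite ltNge (ltW Su').
have := Hnear (ratr u) (le_lt_trans r0u' u'u) uv.
by rewrite lt_min => /andP[].
Qed.
End Mset.


Section mlogic.
Context {d : measure_display} {T : measurableType d}.
Implicit Types A B : T -> Prop.

Lemma mnot A : measurable [set w | A w] -> measurable [set w | ~ A w].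
Proof. by move=> mA; exact: measurableC mA. Qed.

Lemma mand A B : measurable [set w | A w] -> measurable [set w | B w] ->
  measurable [set w | A w /\ B w].
Proof. by move=> mA mB; exact: measurableI mA mB. Qed.

Lemma mimp A B : measurable [set w | A w] -> measurable [set w | B w] ->
  measurable [set w | A w -> B w].
Proof.
move=> mA mB; rewrite (_ : [set w | A w -> B w] = ~` [set w | A w] `|` [set w | B w]).
  exact: measurableU (measurableC mA) mB.
apply/seteqP; split => w /=.
  by have [Aw H|nAw _] := pselect (A w); [right; exact: H|left].
by case=> [nA a|bw _] //; exfalso; exact: nA.
Qed.

Lemma mcimp (P : Prop) B : (P -> measurable [set w | B w]) ->
  measurable [set w | P -> B w].
Proof.
have [p|np] := pselect P => H.
  rewrite (_ : [set w | P -> B w] = [set w | B w]); first exact: H.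
  by apply/seteqP; split=> w /=; auto.
by rewrite (_ : [set w | P -> B w] = setT)//; apply/seteqP; split=> w //= _ /np.
Qed.

Lemma mcand (P : Prop) B : (P -> measurable [set w | B w]) ->
  measurable [set w | P /\ B w].
Proof.
have [p|np] := pselect P => H.
  rewrite (_ : [set w | P /\ B w] = [set w | B w]); first exact: H.
  by apply/seteqP; split=> w /=; [case|].
by rewrite (_ : [set w | P /\ B w] = set0)//; apply/seteqP; split=> w //= [/np].
Qed.

Lemma mex_rat (P : rat -> T -> Prop) : (forall u, measurable [set w | P u w]) ->
  measurable [set w | exists u, P u w].
Proof.
move=> H; rewrite (_ : [set w | exists u, P u w] = \bigcup_u [set w | P u w]).
  exact: bigcupT_measurable_rat.
by apply/seteqP; split=> w /= [u]; exists u.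
Qed.

Lemma mall_rat (P : rat -> T -> Prop) : (forall u, measurable [set w | P u w]) ->
  measurable [set w | forall u, P u w].
Proof.
move=> H; rewrite (_ : [set w | forall u, P u w] = ~` [set w | exists u, ~ P u w]).
  by apply: measurableC; apply: mex_rat => u; exact: mnot.
apply/seteqP; split=> w /=; first by move=> H' [u /(_ (H' u))].
by move=> H' u; apply: contra_notP H' => nP; exists u.
Qed.

Lemma mex_nat (P : nat -> T -> Prop) : (forall u, measurable [set w | P u w]) ->
  measurable [set w | exists u, P u w].
Proof.
move=> H; rewrite (_ : [set w | exists u, P u w] = \bigcup_u [set w | P u w]).
  exact: bigcupT_measurable.
by apply/seteqP; split=> w /= [u]; exists u.
Qed.

Lemma mall_nat (P : nat -> T -> Prop) : (forall u, measurable [set w | P u w]) ->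
  measurable [set w | forall u, P u w].
Proof.
move=> H; rewrite (_ : [set w | forall u, P u w] = ~` [set w | exists u, ~ P u w]).
  by apply: measurableC; apply: mex_nat => u; exact: mnot.
apply/seteqP; split=> w /=; first by move=> H' [u /(_ (H' u))].
by move=> H' u; apply: contra_notP H' => nP; exists u.
Qed.
End mlogic.

Section Mmeas.
Context {R : realType} {d : measure_display} {T : measurableType d}.
Variables (X : R -> T -> R) (b : R -> R).
Hypothesis HXm : forall t, 0 <= t -> forall B : set R, measurable B ->
  measurable (X t @^-1` B).

Lemma mSg k u : 0 <= (ratr u : R) -> measurable [set w | Sg X b k u w].
Proof.
move=> u0; rewrite /Sg /Yproc.
rewrite (_ : [set w | _] = X (ratr u) @^-1` `](b (ratr u) - k.+1%:R^-1), +oo[).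
  exact: HXm.
by apply/seteqP; split=> w /=; rewrite in_itv /= andbT; set e := (k.+1%:R^-1 : R); lra.
Qed.

Lemma mYabs u c : 0 <= (ratr u : R) ->
  measurable [set w | `|Yproc X b (ratr u) w| < c].
Proof.
move=> u0; rewrite /Yproc.
rewrite (_ : [set w | _] = X (ratr u) @^-1` `](b (ratr u) - c), (b (ratr u) + c)[).
  exact: HXm.
apply/seteqP; split=> w /=; rewrite in_itv /= ltr_norml.
  by move=> /andP[h1 h2]; apply/andP; split; lra.
by move=> /andP[h1 h2]; apply/andP; split; lra.
Qed.

Lemma mMset p k : measurable (Mset X b p k).
Proof.
rewrite /Mset; apply: mcand => p0.
apply: mand.
  apply: mex_rat => a; apply: mcand => pa.
  apply: mall_rat => u; apply: mcimp => pu; apply: mcimp => ua.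
  by apply: mnot; apply: mSg; exact: le_trans (ltW pu).
apply: mall_nat => j; apply: mex_rat => v; apply: mand.
  apply: mex_rat => u; apply: mcand => pu; apply: mcand => uv.
  by apply: mSg; exact: le_trans (ltW pu).
apply: mall_rat => u; apply: mcimp => pu; apply: mimp.
  apply: mex_rat => u'; apply: mcand => pu'; apply: mcand => u'u.
  by apply: mSg; exact: le_trans (ltW pu').
apply: mcimp => uv; apply: mYabs; exact: le_trans (ltW pu).
Qed.
End Mmeas.


Section pred.
Context {R : realType} {d : measure_display} {T : measurableType d}.
Variables (F : R -> set (set T)) (X : R -> T -> R) (b : R -> R).
Hypothesis HF : filtration F.
Hypothesis Had : adapted F X.
Local Notation PT := (g_sigma_algebraType (pred_rects F)).
Local Notation Y := (Yproc X b).

Lemma FsetT u : 0 <= u -> F u setT.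
Proof.
move=> u0; have [[H0 HC _] _] := HF.1 u u0.
by rewrite -(setD0 setT); exact: HC.
Qed.

Lemma FsetC u A : 0 <= u -> F u A -> F u (~` A).
Proof. by move=> u0 FA; have [[_ HC _] _] := HF.1 u u0; rewrite -setTD; exact: HC. Qed.

Lemma pT_gt a : 0 <= a -> @measurable _ PT [set p : T * R | a < p.2].
Proof.
move=> a0.
rewrite (_ : [set p : T * R | a < p.2] =
  \bigcup_n ([set: T] `*` [set v | a < v <= a + n.+1%:R])).
  apply: bigcupT_measurable => n; apply: sub_gen_smallest; right.
  exists a, (a + n.+1%:R), setT; split => //; first by rewrite ltrDl.
  exact: FsetT.
apply/seteqP; split => [[w t] /= at_|[w t] [n _] /= [_ /andP[]]//].
exists (Num.truncn (t - a)) => //=; split => //; rewrite at_ /= -lerBlDl.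
exact/ltW/truncnS_gt.
Qed.

Lemma pT_imp u (A : set T) : 0 <= u -> F u A ->
  @measurable _ PT [set p : T * R | u < p.2 -> A p.1].
Proof.
move=> u0 FA.
rewrite (_ : [set p : T * R | u < p.2 -> A p.1] =
  ~` \bigcup_n ((~` A) `*` [set v | u < v <= u + n.+1%:R])).
  apply: measurableC; apply: bigcupT_measurable => n; apply: sub_gen_smallest; right.
  exists u, (u + n.+1%:R), (~` A); split => //; first by rewrite ltrDl.
  exact: FsetC.
apply/seteqP; split => [[w t] /= H [n _] /= [nA /andP[ut _]]|[w t] /= H ut].
  exact: nA (H ut).
apply: contra_notP H => nA; exists (Num.truncn (t - u)) => //=; split => //.
by rewrite ut /= -lerBlDl; exact/ltW/truncnS_gt.
Qed.

Definition Lset (q c : R) : set (T * R) := [set p | exists n : nat, exists a : rat,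
  0 <= (ratr a : R) /\ (ratr a < p.2 /\ forall u : rat, (ratr a : R) < ratr u ->
   ratr u < p.2 -> `|Y (ratr u) p.1 - q| <= c - n.+1%:R^-1)].

Lemma Lset_meas q c : @measurable _ PT (Lset q c).
Proof.
rewrite /Lset; apply: mex_nat => n; apply: mex_rat => a; apply: mcand => a0.
apply: mand; first exact: pT_gt.
apply: mall_rat => u; apply: mcimp => au.
have u0 : 0 <= (ratr u : R) by exact: le_trans (ltW au).
apply: (pT_imp u0 (A := [set w | `|Y (ratr u) w - q| <= c - n.+1%:R^-1])).
rewrite (_ : [set w | _] = X (ratr u) @^-1`
  `[q + b (ratr u) - (c - n.+1%:R^-1), q + b (ratr u) + (c - n.+1%:R^-1)]).
  exact: Had.
apply/seteqP; split=> w /=; rewrite in_itv /= ler_norml /Yproc.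
  by move=> /andP[h1 h2]; apply/andP; split; set e := c - _ in h1 h2 *; lra.
by move=> /andP[h1 h2]; apply/andP; split; set e := c - _ in h1 h2 *; lra.
Qed.

Hypothesis HX : cadlag X.
Hypothesis Hb : {within [set t : R | 0 <= t], continuous b}.

Lemma LsetE q c w t : Lset q c (w, t) <-> (0 < t /\ `|Zl X b t w - q| < c).
Proof.
split.
  move=> [n [a [a0 [/= at_ H]]]].
  have t0 : 0 < t by exact: le_lt_trans at_.
  split => //.
  have [δ δ0 Hδ] := Yleft_delta HX Hb w t0 (eps_gt0 n).
  have [u [um ut]] : exists u : rat, Num.max (t - δ) (ratr a) < ratr u /\ (ratr u : R) < t.
    by apply: ratP; rewrite gt_max at_ gtrBl δ0.
  rewrite gt_max in um; case/andP: um => um1 um2.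
  have h1 := Hδ (ratr u); rewrite um1 ut in h1; have {}h1 := h1 isT.
  have h2 := H u um2 ut.
  have h3 := ler_distD (Yproc X b (ratr u) w) (Zl X b t w) q.
  set e := (n.+1%:R^-1 : R) in h1 h2 h3 *; lra.
move=> [t0 h].
have ch : 0 < (c - `|Zl X b t w - q|) / 2 by rewrite divr_gt0// subr_gt0.
have [n Hn] := ltr_add_invr ch; rewrite add0r in Hn.
have [δ δ0 Hδ] := Yleft_delta HX Hb w t0 (eps_gt0 n).
have [a [am at_]] : exists a : rat, Num.max (t - δ) 0 < ratr a /\ (ratr a : R) < t.
  by apply: ratP; rewrite gt_max t0 gtrBl δ0.
rewrite gt_max in am; case/andP: am => am1 am2.
exists n, a; split; first exact: ltW.
split => // u au ut /=.
have h1 := Hδ (ratr u); rewrite (lt_trans am1 au) ut in h1; have {}h1 := h1 isT.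
have h3 := ler_distD (Zl X b t w) (Yproc X b (ratr u) w) q.
rewrite distrC in h1.
set e := (n.+1%:R^-1 : R) in Hn h1 h3 *; lra.
Qed.
End pred.


Section ptilde.
Context {R : realType} {d : measure_display} {T : measurableType d}.
Variables (F : R -> set (set T)) (X : R -> T -> R) (b : R -> R).
Hypothesis HF : filtration F.
Hypothesis Had : adapted F X.
Hypothesis HX : cadlag X.
Hypothesis Hb : {within [set t : R | 0 <= t], continuous b}.
Local Notation PT := (g_sigma_algebraType (pred_rects F)).
Local Notation PTT := (g_sigma_algebraType (ptilde_rects F)).

Definition Gset : set (T * (R * R)) := [set p | 0 < p.2.1 /\
  Zl X b p.2.1 p.1 < 0 /\ p.2.2 = - Zl X b p.2.1 p.1].

Lemma lift1 (A : set (T * R)) : @measurable _ PT A ->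
  @measurable _ PTT [set p : T * (R * R) | A (p.1, p.2.1)].
Proof.
move=> mA; apply: sub_gen_smallest; exists A, setT; split => //.
by apply/seteqP; split => p /=; [move=> ?; split|case].
Qed.

Lemma lift2 (B : set R) : measurable B ->
  @measurable _ PTT [set p : T * (R * R) | B p.2.2].
Proof.
move=> mB; apply: sub_gen_smallest; exists setT, B; split => //.
  exact: (@measurableT _ PT).
by apply/seteqP; split => p /=; [move=> ?; split|case].
Qed.

Lemma Gset_meas : @measurable _ PTT Gset.
Proof.
rewrite (_ : Gset = [set p | (exists q : rat, (ratr q : R) < 0 /\
   Lset X b (ratr q) (- ratr q) (p.1, p.2.1)) /\
   forall n : nat, exists q : rat, Lset X b (ratr q) (n.+1%:R^-1) (p.1, p.2.1) /\
     `|p.2.2 + ratr q| < n.+1%:R^-1]).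
  apply: mand.
    apply: mex_rat => q; apply: mcand => q0; apply: lift1; exact: Lset_meas.
  apply: mall_nat => n; apply: mex_rat => q; apply: mand.
    apply: lift1; exact: Lset_meas.
  apply: (lift2 (B := [set x : R | `|x + ratr q| < n.+1%:R^-1])).
  rewrite (_ : [set x : R | _] = `](- ratr q - n.+1%:R^-1), (- ratr q + n.+1%:R^-1)[%classic).
    exact: measurable_itv.
  apply/seteqP; split => x /=; rewrite in_itv /= ltr_norml => /andP[h1 h2];
    apply/andP; split; set e := (n.+1%:R^-1 : R) in h1 h2 *; lra.
apply/seteqP; split => [[w [t x]] /= [t0 [Z0 /= xZ]]|[w [t x]] /= [[q [q0 /(LsetE HX Hb) [t0 hq]]] H]].
  split.
    have [q [q1 q2]] : exists q : rat, Zl X b t w < ratr q /\ (ratr q : R) < Zl X b t w / 2.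
      by apply: ratP; lra.
    exists q; split; first by lra.
    apply/(LsetE HX Hb); split => //; rewrite ltr_norml; apply/andP; split; lra.
  move=> n.
  have [q [q1 q2]] : exists q : rat, Zl X b t w - n.+1%:R^-1 < ratr q /\ (ratr q : R) < Zl X b t w.
    by apply: ratP; rewrite gtrBl eps_gt0.
  exists q; split.
    apply/(LsetE HX Hb); split => //; rewrite ltr_norml; apply/andP; split;
    set e := (n.+1%:R^-1 : R) in q1 q2 *; lra.
  by rewrite /= xZ ltr_norml; apply/andP; split; set e := (n.+1%:R^-1 : R) in q1 q2 *; lra.
split => //; split.
  by move: hq; rewrite ltr_norml => /andP[h1 h2]; lra.
apply/eqP; rewrite -subr_eq0 opprK -normr_eq0 eq_le normr_ge0 andbT.
apply/ler_addgt0Pr => e e0; rewrite add0r.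
have [n Hn] := ltr_add_invr (divr_gt0 e0 (ltr0n _ 2) : 0 < e / 2); rewrite add0r in Hn.
have [q' [/(LsetE HX Hb) [_ h1] h2]] := H n.
have h3 : `|x + Zl X b t w| <= `|x + ratr q'| + `|Zl X b t w - ratr q'|.
  rewrite (_ : x + Zl X b t w = (x + ratr q') + (Zl X b t w - ratr q')); last by ring.
  exact: ler_normD.
apply: ltW; set ee := (n.+1%:R^-1 : R) in Hn h1 h2 h3 *.
by apply: (le_lt_trans h3); lra.
Qed.

Definition Wp : T -> R * R -> \bar R := fun w z => (\1_Gset (w, z))%:E.

Lemma Wp_ptilde : ptilde_fun F Wp.
Proof.
move=> B mB; have mG := Gset_meas.
have E1 p : Gset p -> Wp p.1 p.2 = 1%:E.
  by case: p => w z Gp; rewrite /Wp indicE mem_set.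
have E0 p : ~ Gset p -> Wp p.1 p.2 = 0%:E.
  by case: p => w z Gp; rewrite /Wp indicE memNset.
have [B1|nB1] := pselect (B 1%:E); have [B0|nB0] := pselect (B 0%:E).
- rewrite (_ : [set p | _] = setT); first exact: (@measurableT _ PTT).
  apply/seteqP; split => p //= _.
  by have [Gp|nGp] := pselect (Gset p); [rewrite E1|rewrite E0].
- rewrite (_ : [set p | _] = Gset) //.
  apply/seteqP; split => p /=.
    by have [Gp|nGp] := pselect (Gset p); [|rewrite E0].
  by move=> Gp; rewrite E1.
- rewrite (_ : [set p | _] = ~` Gset); first exact: (@measurableC _ PTT).
  apply/seteqP; split => p /=.
    by have [Gp|nGp] := pselect (Gset p); [rewrite E1|].
  by move=> Gp; rewrite E0.
- rewrite (_ : [set p | _] = set0); first exact: (@measurable0 _ PTT).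
  apply/seteqP; split => p //=.
  by have [Gp|nGp] := pselect (Gset p); [rewrite E1|rewrite E0].
Qed.

Lemma Wp_ge0 w z : (0 <= Wp w z)%E.
Proof. by rewrite /Wp lee_fin. Qed.
End ptilde.


Section part1.
Context {R : realType} {d : measure_display} {T : measurableType d}.
Variables (P : probability T R) (F : R -> set (set T)) (X : R -> T -> R) (b : R -> R)
  (nu : T -> {measure set (R * R) -> \bar R}).
Hypothesis HF : filtration F.
Hypothesis Had : adapted F X.
Hypothesis HX : cadlag X.
Hypothesis Hb : {within [set t : R | 0 <= t], continuous b}.
Hypothesis HX0 : forall w, X 0 w < b 0.
Hypothesis Hnu : jump_compensator P F X nu.

Lemma G_Gamma0 w z : Gset X b (w, z) -> Gamma0 X b w z.
Proof.
case: z => t x [/= t0 [Z0 xZ]]; rewrite /Gamma0 /=.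
rewrite (Yleft HX Hb w t0).2; split; first by lra.
by rewrite xZ; lra.
Qed.

Lemma nu_oo0 w : (forall t, 0 <= t ->
    nu_int nu (fun w' z => (\1_(Gamma0 X b w') z)%:E) w t = 0%E) ->
  nu_int_oo nu (Wp X b) w = 0%E.
Proof.
move=> H0; rewrite /nu_int_oo; apply: inner0 => [z _|S mS SD]; first exact: Wp_ge0.
pose D (n : nat) : set (R * R) := [set z | 0 < z.1 <= n%:R].
have mD n : measurable (D n).
  rewrite (_ : D n = `]0, n%:R]%classic `*` setT).
    exact: measurableX.
  by apply/seteqP; split => z /=; rewrite in_itv /=; [move=> ->|case].
have S0 n : nu w (S `&` D n) = 0%E.
  apply/eqP; rewrite eq_le measure_ge0 andbT.
  rewrite -(H0 n%:R) //; apply: inner_ge.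
  - exact: measurableI mS (mD _).
  - by move=> z [].
  - by move=> z _; rewrite lee_fin.
  move=> z [/SD [_ /=]]; rewrite /Wp indicE.
  have [Gz|nGz] := pselect (Gset X b (w, z)); last by rewrite memNset// lte_fin ltxx.
  by move=> _ _; rewrite indicE mem_set//; exact: G_Gamma0.
have : (nu w).-negligible (\bigcup_n (S `&` D n)).
  apply: negligible_bigcup => n; apply/negligibleP; [exact: measurableI mS (mD n)|exact: S0].
rewrite (_ : \bigcup_n (S `&` D n) = S); first by move/negligibleP => ->.
apply/seteqP; split => [z [n _ []]//|z Sz].
have [/= z0 _] := SD z Sz.
exists (Num.truncn z.1).+1 => //; split => //; rewrite /D /=; apply/andP; split => //.
exact/ltW/truncnS_gt.
Qed.

Lemma mu_ge1 w s : 0 < s -> Yproc X b s w = 0 -> Zl X b s w < 0 ->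
  (1 <= mu_int_oo X (Wp X b) w)%E.
Proof.
move=> s0 Ys Zs.
have hj : jump X s w = - Zl X b s w.
  rewrite /jump (Yleft HX Hb w s0).2; move: Ys; rewrite /Yproc; lra.
apply: esum_ge; exists [set s].
  split; first exact: finite_set1.
  by move=> _ ->; split => //; rewrite hj oppr_eq0 lt_eqF.
rewrite fsbig_set1 /Wp indicE mem_set//=.
Qed.

Lemma part1 : P.-negligible [set w | exists t : R, 0 <= t /\
      nu_int nu (fun w' z => (\1_(Gamma0 X b w') z)%:E) w t != 0%E] ->
   P.-negligible (J0 X b).
Proof.
move=> [N1 [mN1 PN1 sub1]].
have Hc := (Hnu (Wp_ptilde HF Had HX Hb) (@Wp_ge0 _ _ _ X b)).2.
have Enu : (\int[P]_w nu_int_oo nu (Wp X b) w = 0)%E.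
  apply: inner0 => [w _|S mS SD]; first by apply: integral_ge0 => z _; exact: Wp_ge0.
  apply/eqP; rewrite eq_le measure_ge0 andbT -PN1; apply: le_measure; rewrite ?inE//.
  move=> w Sw; have [_ /= Hw] := SD w Sw.
  apply: contrapT => nN1.
  have : nu_int_oo nu (Wp X b) w = 0%E.
    apply: nu_oo0 => t t0; apply/eqP; apply: contra_notT nN1 => Ht.
    by apply: sub1; exists t.
  by move=> e; rewrite e ltxx in Hw.
have Emu : (\int[P]_w mu_int_oo X (Wp X b) w = 0)%E by rewrite Hc.
have HXm t : 0 <= t -> forall B : set R, measurable B -> measurable (X t @^-1` B).
  by move=> t0 B mB; apply: (HF.1 t t0).2; exact: Had.
pose M := \bigcup_(p : rat) \bigcup_(k : nat) Mset X b p k.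
have mM : measurable M.
  apply: bigcupT_measurable_rat => p; apply: bigcupT_measurable => k.
  exact: mMset.
exists M; split => //.
  apply/eqP; rewrite eq_le measure_ge0 andbT -Emu.
  apply: inner_ge => //.
    by move=> w _; apply: esum_ge0 => *; exact: Wp_ge0.
  move=> w [p _ [k _ /(M_sub_E HX Hb) [s [s0 Ys Zs]]]].
  exact: mu_ge1 Zs.
move=> w [r [hr Zr Yr]].
have r0 : 0 <= r.
  have : (0 <= hit_time X b w)%E.
    by apply: le_ereal_inf_tmp => _ [t [t0 _] <-]; rewrite lee_fin.
  by rewrite hr lee_fin.
have {}r0 : 0 < r.
  rewrite lt_neqAle r0 andbT; apply/eqP => r0'.
  by move: Yr; rewrite -r0' /Yproc => /eqP; rewrite subr_eq0 => /eqP e; have := HX0 w; rewrite e ltxx.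
have [p [k Mw]] := E_sub_M HX Hb r0 Yr Zr.
by exists p => //; exists k.
Qed.
End part1.


Section part2a.
Context {R : realType} {d : measure_display} {T : measurableType d}.
Variables (F : R -> set (set T)).
Hypothesis HF : filtration F.

Lemma pred_sub_prod : predictable_set F `<=` @measurable _ (T * R)%type.
Proof.
apply: smallest_sub; first exact: sigma_algebra_measurable.
move=> C [[A [FA ->]]|[s [t [A [s0 st FA ->]]]]].
  apply: measurableX; first exact: (HF.1 0 (lexx _)).2.
  exact: measurable_set1.
apply: measurableX; first exact: (HF.1 s s0).2.
rewrite (_ : [set u | s < u <= t] = `]s, t]%classic); first exact: measurable_itv.
by apply/seteqP; split => u /=; rewrite in_itv.
Qed.

Variable (A : R -> T -> R).
Hypothesis hA : predictable_fun F (fun w t => (A t w)%:E).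

Lemma A_meas t : measurable_fun setT (A t).
Proof.
apply/measurable_EFinP => _ B mB; rewrite setTI.
have := measurable_ysection t (pred_sub_prod (hA mB)).
rewrite /ysection /=; congr (measurable _); apply/seteqP; split => x /=;
  by rewrite inE.
Qed.

Variable alpha : T -> {measure set R -> \bar R}.
Hypothesis hA4 : forall w s t, 0 <= s -> s <= t ->
  alpha w [set u | s < u <= t] = (A t w - A s w)%:E.

Definition Dn (n : nat) : set R := [set u : R | 0 < u <= n%:R].

Lemma mDn n : measurable (Dn n).
Proof.
rewrite (_ : Dn n = `]0, n%:R]%classic); first exact: measurable_itv.
by apply/seteqP; split => u /=; rewrite in_itv.
Qed.

Lemma alphaD_fin w n : (alpha w (Dn n) < +oo)%E.
Proof. by rewrite /Dn hA4// ltry. Qed.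

Lemma alpha_n_meas n U : measurable U ->
  measurable_fun setT (fun w => alpha w (U `&` Dn n)).
Proof.
move: U; apply: (@dynkin_induction _ R (R.-ocitv.-measurable : set (set R))
  (fun U => measurable_fun setT (fun w => alpha w (U `&` Dn n)))) => //.
- exact: ocitvI.
- under eq_fun do rewrite setTI /Dn hA4//.
  by apply/measurable_EFinP; apply: measurable_funB; exact: A_meas.
- move=> U /ocitvP[->|[[a c] /= ac ->]].
    by under eq_fun do rewrite set0I measure0; exact: measurable_cst.
  have [le|lt] := leP (Num.max a 0) (Num.min c n%:R).
    rewrite (_ : `]a, c]%classic `&` Dn n = [set u | Num.max a 0 < u <= Num.min c n%:R]).
      under eq_fun do rewrite hA4 ?le_max ?lexx ?orbT//.
      by apply/measurable_EFinP; apply: measurable_funB; apply: A_meas;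
        rewrite (le_trans _ le)// le_max lexx orbT.
    apply/seteqP; split => u /=; rewrite in_itv /= gt_max le_min.
      by move=> [/andP[au uc] /andP[u0 un]]; apply/andP; split; apply/andP; split.
    by move=> /andP[/andP[au u0] /andP[uc un]]; split; apply/andP; split.
  rewrite (_ : `]a, c]%classic `&` Dn n = set0).
    by under eq_fun do rewrite measure0; exact: measurable_cst.
  apply/seteqP; split => u //=; rewrite in_itv /= => -[/andP[au uc] /andP[u0 un]].
  have h1 : Num.max a 0 < u by rewrite gt_max au u0.
  have h2 : u <= Num.min c n%:R by rewrite le_min uc un.
  by have := lt_trans (le_lt_trans h2 lt) h1; rewrite ltxx.
- move=> U mU HU.
  rewrite (_ : (fun w => alpha w (~` U `&` Dn n)) =
    (fun w => alpha w (Dn n) - alpha w (Dn n `&` (U `&` Dn n)))%E).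
    apply: emeasurable_funB => //.
      under eq_fun do rewrite /Dn hA4//.
      by apply/measurable_EFinP; apply: measurable_funB; exact: A_meas.
    by rewrite (_ : Dn n `&` (U `&` Dn n) = U `&` Dn n)// setIC -setIA setIid.
  apply/funext => w; rewrite -measureD; last 3 first.
  - exact: mDn.
  - exact: measurableI mU (mDn n).
  - exact: alphaD_fin.
  by congr (alpha w _); apply/seteqP; split => u /=; [move=> [nU Du]; split => // -[]|move=> [Du nUD]; split => // Uu; apply: nUD].
- move=> G mG tG HG.
  rewrite (_ : (fun w => alpha w (\bigcup_k G k `&` Dn n)) =
    (fun w => \sum_(k <oo | k \in setT) alpha w (G k `&` Dn n))%E).
    by apply: ge0_emeasurable_sum => // k _ _; exact: HG.
  apply/funext => w; rewrite setI_bigcupl measure_bigcup//.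
    by move=> i _; exact: measurableI (mDn n).
  by apply: trivIset_setIr.
Qed.

Definition kn (n : nat) : T -> {measure set R -> \bar R} :=
  fun w => mrestr (alpha w) (mDn n).

Lemma kn_meas n U : measurable U -> measurable_fun setT (kn n ^~ U).
Proof. exact: alpha_n_meas. Qed.

HB.instance Definition _ n := isKernel.Build _ _ T R R (kn n) (@kn_meas n).

Lemma hn_meas n (N : set (T * R)) : measurable N ->
  measurable_fun setT (fun w => alpha w (xsection N w `&` Dn n)).
Proof.
move=> mN.
have := @measurable_prod_subset_xsection_kernel _ _ T R R (kn n) setT measurableT.
move=> /(_ _ N mN) [].
  move=> x; exists (fine (alpha x (Dn n)) + 1) => B mB.
  rewrite /mrestr /kn /mrestr /=.
  rewrite (@le_lt_trans _ _ (alpha x (Dn n)))//.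
    apply: le_measure; rewrite ?inE//.
      by apply: measurableI; [apply: measurableI|apply: mDn].
    exact: mDn.
  rewrite /Dn hA4//= lte_fin ltrDl//.
move=> _.
suff -> : (fun w => alpha w (xsection N w `&` Dn n)) =
  (fun x => mrestr (kn n x) measurableT (xsection N x)) by [].
by apply/funext => w; rewrite /mrestr /kn /mrestr setIT.
Qed.
End part2a.




Section part2.
Context {R : realType} {d : measure_display} {T : measurableType d}.
Variables (P : probability T R) (F : R -> set (set T)) (X : R -> T -> R) (b : R -> R)
  (nu : T -> {measure set (R * R) -> \bar R}).
Hypothesis HF : filtration F.
Variables (A : R -> T -> R) (alpha : T -> {measure set R -> \bar R})
  (K : T -> R -> {measure set R -> \bar R}).
Hypothesis hA : predictable_fun F (fun w t => (A t w)%:E).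
Hypothesis hA4 : forall w s t, 0 <= s -> s <= t ->
  alpha w [set u | s < u <= t] = (A t w - A s w)%:E.
Hypothesis hdis : forall w (C : set (R * R)), measurable C -> C `<=` [set z | 0 < z.1] ->
  nu w C = (\int[alpha w]_t K w t [set x | C (t, x)])%E.
Variable N : set (T * R).
Hypothesis mN : measurable N.
Hypothesis subN : [set p | exists x, K p.1 p.2 [set x] != 0%E] `<=` N.
Hypothesis intN : (\int[P]_w alpha w [set t | N (w, t)] = 0)%E.

Let hn n w := alpha w (xsection N w `&` Dn n).

Lemma hn_negl n : P.-negligible [set w | hn n w != 0%E].
Proof.
have mh : measurable_fun setT (hn n) by exact: (hn_meas HF hA hA4 n mN).
have h0 : (\int[P]_w `|hn n w| = 0)%E.
  apply/eqP; rewrite eq_le integral_ge0// andbT -intN.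
  apply: inner_le => // w _; rewrite gee0_abs//.
  apply: le_measure; rewrite ?inE//.
  - by apply: measurableI; [exact: measurable_xsection|exact: mDn].
  - rewrite (_ : [set t | N (w, t)] = xsection N w); first exact: measurable_xsection.
    by apply/seteqP; split => t /=; rewrite /xsection /= inE.
  - by move=> t [] /=; rewrite /xsection /= inE.
have := (ae_eq_integral_abs P measurableT mh).1 h0.
rewrite /ae_eq /= => H; apply: negligibleS H => w /= /eqP hw H'; exact: hw (H' I).
Qed.

Lemma indic_pos (U : Type) (B : set U) z : (0 < (\1_B z)%:E :> \bar R)%E -> B z.
Proof.
rewrite indicE; have [/set_mem//|nB] := boolP (z \in B).
by rewrite lte_fin ltxx.
Qed.

Lemma bad_negl : P.-negligible [set w | exists t : R, 0 <= t /\
      nu_int nu (fun w' z => (\1_(Gamma0 X b w') z)%:E) w t != 0%E].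
Proof.
apply: (negligibleS _ (negligible_bigcup hn_negl)).
move=> w [t [t0 Hne]]; apply: contrapT => Hn.
have hz n : hn n w = 0%E by apply: contrapT => /eqP ne; apply: Hn; exists n.
move/eqP: Hne; apply; rewrite /nu_int.
apply: inner0 => [z _|S mS SD]; first by rewrite lee_fin.
rewrite hdis//; last by move=> z /SD [/= /andP[]].
apply: inner0 => [s _|S' mS' S'D]; first exact: measure_ge0.
apply/negligibleP => //.
have nn n : (alpha w).-negligible (xsection N w `&` Dn n).
  apply/negligibleP; last exact: hz.
  by apply: measurableI; [exact: measurable_xsection|exact: mDn].
apply: (negligibleS _ (negligible_bigcup nn)).
move=> s /S'D [_ /= Kpos].
have [x0 Sx0] : exists x0, S (s, x0).
  apply: contrapT => nS; move: Kpos.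
  rewrite (_ : [set x | S (s, x)] = set0) ?measure0 ?ltxx//.
  by apply/seteqP; split => x //= Sx; apply: nS; exists x.
have [Ds G0'] := SD _ Sx0.
have /andP[s0 st] := Ds; have G0 := indic_pos G0'.
have E1 : [set x | S (s, x)] = [set x0].
  apply/seteqP; split => [x Sx|x ->//].
  have [_ G1'] := SD _ Sx; have G1 := indic_pos G1'.
  by case: G1 => _ /= ->; case: G0 => _ /= ->.
rewrite E1 in Kpos.
have Ns : N (w, s) by apply: subN; exists x0; rewrite /= gt_eqF.
exists (Num.truncn s).+1 => //; split.
  by rewrite /xsection /= inE.
by rewrite /Dn /= s0 /=; exact/ltW/truncnS_gt.
Qed.
End part2.

Unset Implicit Arguments.
Set Strict Implicit.

Theorem proposition3p5 (R : realType) (d : measure_display) (T : measurableType d)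
  (P : probability T R) (F : R -> set (set T)) (X : R -> T -> R) (b : R -> R)
  (nu : T -> {measure set (R * R) -> \bar R}) :
  usual_conditions P F ->
  semimartingale P F X ->
  {within [set t : R | 0 <= t], continuous b} ->
  (forall w, X 0 w < b 0) ->
  jump_compensator P F X nu ->
  (* main claim: 1_{Gamma0} * nu^X = 0 up to evanescence  ==>  P(J0) = 0 *)
  (P.-negligible [set w | exists t : R, 0 <= t /\
      nu_int nu (fun w' z => (\1_(Gamma0 X b w') z)%:E) w t != 0%E] ->
   P.-negligible (J0 X b)) /\
  (* in particular: predictable disintegration nu = K(dx) dA with K diffuse *)
  (forall (A : R -> T -> R) (alpha : T -> {measure set R -> \bar R})
          (K : T -> R -> {measure set R -> \bar R}),
     (* A is a predictable increasing (cadlag) process *)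
     cadlag A -> predictable_fun F (fun w t => (A t w)%:E) ->
     (forall w s t, 0 <= s -> s <= t -> A s w <= A t w) ->
     (* alpha w = dA(w), the Lebesgue-Stieltjes measure of A(w) on ]0, oo[ *)
     (forall w s t, 0 <= s -> s <= t ->
        alpha w [set u | s < u <= t] = (A t w - A s w)%:E) ->
     (forall w, alpha w [set u | u <= 0] = 0%E) ->
     (* K is a predictable kernel *)
     (forall B : set R, measurable B -> predictable_fun F (fun w t => K w t B)) ->
     (* nu(w; dt, dx) = K(w, t, dx) dA_t(w) *)
     (forall w (C : set (R * R)), measurable C -> C `<=` [set z | 0 < z.1] ->
        nu w C = (\int[alpha w]_t K w t [set x | C (t, x)])%E) ->
     (* K(w, t, .) is diffuse for P (x) dA - almost every (w, t) *)
     (exists N : set (T * R), [/\ measurable N,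
        [set p | exists x, K p.1 p.2 [set x] != 0%E] `<=` N &
        (\int[P]_w alpha w [set t | N (w, t)] = 0)%E]) ->
     P.-negligible (J0 X b)).
Proof.
move=> [HF _] [HX [Had _]] Hb HX0 Hnu.
have P1 := part1 HF Had HX Hb HX0 Hnu.
split => //.
move=> A alpha K _ hA _ hA4 _ _ hdis [N [mN subN intN]].
apply: P1; exact: (bad_negl X b HF hA hA4 hdis mN subN intN).
Qed.
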